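(* The expected total number of queries to $\mathcal{O}_1$ and $\mathcal{O}_2$ performed by the modified multi-phase process described in the context is $O(n)$.
   Context: Let $n\ge2$ be an integer such that $m=n/\log_2 n$ is an integer, and let $S'$ be a set of $m$ distinct elements of a totally ordered set. For $\rho\in(0,1]$, $S^-_\rho$ denotes the set of the $\lceil \rho m\rceil$ smallest elements of $S'$ and $S^+_\rho=S'\setminus S^-_\rho$. There are two oracles $\mathcal{O}_1,\mathcal{O}_2$ which can be queried with an element $x\in S'$ and answer ''relevant'' or ''not relevant'' in constant time, all answers being mutually independent; for constants $p_1,p_2\in[0,\tfrac12)$: $\mathcal{O}_1$ reports $x$ relevant with probability at least $1-p_1$ if $x\in S^-_{1/6}$ and at most $p_1$ if $x\in S^+_{1/3}$; $\mathcal{O}_2$ reports $x$ relevant with probability at least $1-p_2$ if $x\in S^-_{1/3}$ and at most $p_2$ if $x\in S^+_{3/4}$. For $q\in[0,\tfrac12)$ let $c_q=\lceil 4(1-q)/(1-2q)^2\rceil$. Let $\eta = 1+\lceil \log_2 \frac{n}{\log_2 n}\rceil$. Modified multi-phase process: the elements of $S'$ are considered one at a time. For the current element $x$, a preliminary test is performed consisting of $8c_{p_1}\lceil \ln n\rceil+1$ queries to $\mathcal{O}_1$ on $x$; it is passed if the majority report $x$ relevant, otherwise $x$ is discarded and the next element is considered. Then, for $i=1,\dots,\eta$, the $i$-th test consists of $2\lceil 2^i\ln n\rceil c_{p_2}+1$ queries to $\mathcal{O}_2$ on $x$ and is passed if the majority report $x$ relevant; if $x$ fails a test it is discarded and the next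 element is considered. The process stops and returns the first element that passes the $\eta$-th test. Here $\ln$ is the natural logarithm; the $O(\cdot)$ constant depends only on $p_1,p_2$. *)

(* Defs.v *)
From HB Require Import structures.
From mathcomp Require Import all_boot all_order all_algebra.
From mathcomp Require Import reals exp.
Set Implicit Arguments. Unset Strict Implicit. Unset Printing Implicit Defensive.
Import Order.TTheory GRing.Theory Num.Theory.
Local Open Scope ring_scope.

(* ceiling as a natural number (used only on nonnegative arguments) *)
Definition ceiln (R : realType) (x : R) : nat := `|Num.ceil x|%N.

Definition log2 (R : realType) (x : R) : R := ln x / ln 2.

Definition cq (R : realType) (q : R) : nat :=
  ceiln (4 * (1 - q) / (1 - 2 * q) ^+ 2).

Definition prelim_size (R : realType) (p1 : R) (n : nat) : nat :=
  (8 * cq p1 * ceiln (ln (n%:R : R)) + 1)%N.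

Definition test_size (R : realType) (p2 : R) (n i : nat) : nat :=
  (2 * ceiln (2 ^+ i * ln (n%:R : R)) * cq p2 + 1)%N.

Definition eta (R : realType) (n : nat) : nat :=
  (1 + ceiln (log2 ((n%:R : R) / log2 (n%:R : R))))%N.

(* S' = {s j | j < m}, enumerated in the order in which the process considers
   its elements (s injective).  rank x = #{y in S' | y < x};
   x in S^-_rho  <->  rank x < ceil(rho m). *)
Definition rankS d (T : orderType d) m (s : 'I_m -> T) (x : T) : nat :=
  #|[pred j : 'I_m | (s j < x)%O]|.

Definition in_lower (R : realType) d (T : orderType d) m (s : 'I_m -> T)
  (rho : R) (x : T) : bool :=
  (rankS s x < ceiln (rho * m%:R))%N.

(* Oracle specification: q x is the probability that a query on x answers
   "relevant"; q x >= 1-p on S^-_{rlo}, q x <= p on S^+_{rhi} = S' \ S^-_{rhi}. *)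
Definition oracle_ok (R : realType) d (T : orderType d) m (s : 'I_m -> T)
  (q : T -> R) (p rlo rhi : R) : Prop :=
  forall j : 'I_m,
    (0 <= q (s j) <= 1) /\
    (in_lower s rlo (s j) -> 1 - p <= q (s j)) /\
    (~~ in_lower s rhi (s j) -> q (s j) <= p).

(* Random tape: for every element (position j < m), T0 independent answers of
   O1 (preliminary test) and, for each test i = 1..E, a block of K independent
   answers of O2, of which the first test_size(i) are used. *)
Definition tape (T0 E K : nat) : finType :=
  ({ffun 'I_T0 -> bool} * {ffun 'I_E -> {ffun 'I_K -> bool}})%type.
Definition Omega (m T0 E K : nat) : finType := {ffun 'I_m -> tape T0 E K}.

Definition bern (R : realType) (r : R) (b : bool) : R := if b then r else 1 - r.

Definition prob (R : realType) d (T : orderType d) m T0 E K (s : 'I_m -> T)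
  (q1 q2 : T -> R) (w : Omega m T0 E K) : R :=
  \prod_(j < m)
    ((\prod_(k < T0) bern (q1 (s j)) ((w j).1 k)) *
     (\prod_(i < E) \prod_(k < K) bern (q2 (s j)) ((w j).2 i k))).

Definition majority K (f : {ffun 'I_K -> bool}) (t : nat) : bool :=
  (t < 2 * \sum_(k < K | (k < t)%N) f k)%N.

(* tests 1..E (block i : 'I_E is test number i+1, of size t (i+1)):
   returns (queries used, all tests passed) *)
Definition run_tests E K (b : {ffun 'I_E -> {ffun 'I_K -> bool}})
  (t : nat -> nat) : nat * bool :=
  foldr (fun i acc =>
           if majority (b i) (t i.+1) then ((t i.+1 + acc.1)%N, acc.2)
           else (t i.+1, false))
        (0%N, true) (enum 'I_E).

Definition run_elem T0 E K (w : tape T0 E K) (t : nat -> nat) : nat * bool :=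
  if majority w.1 T0 then let r := run_tests w.2 t in ((T0 + r.1)%N, r.2)
  else (T0, false).

Definition total_queries m T0 E K (t : nat -> nat) (w : Omega m T0 E K) : nat :=
  foldr (fun j acc => let r := run_elem (w j) t in
                      (r.1 + (if r.2 then 0 else acc))%N)
        0%N (enum 'I_m).

Definition expected_queries (R : realType) (p1 p2 : R) (n : nat)
  d (T : orderType d) m (s : 'I_m -> T) (q1 q2 : T -> R) : R :=
  let T0 := prelim_size p1 n in
  let E := eta R n in
  let K := test_size p2 n E in
  \sum_(w : Omega m T0 E K)
     prob s q1 q2 w * (total_queries (test_size p2 n) w)%:R.

(* Main.v *)
Require Import Defs.
From HB Require Import structures.
From mathcomp Require Import all_boot all_order all_algebra.
From mathcomp Require Import reals exp sequences.
From mathcomp Require Import ring lra zify.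
Import Order.TTheory GRing.Theory Num.Theory.
Set Implicit Arguments. Unset Strict Implicit.
Local Open Scope ring_scope.

Section Ceil.
Variable R : realType.
Lemma ceiln_ge (x : R) : 0 <= x -> x <= (ceiln x)%:R.
Proof.
move=> x0; rewrite /ceiln natr_absz ger0_norm ?ceil_ge0 ?ceil_ge //.
by apply: lt_le_trans x0; rewrite ltrN10.
Qed.
Lemma ceiln_lt (x : R) : 0 <= x -> (ceiln x)%:R < x + 1.
Proof.
move=> x0; rewrite /ceiln natr_absz ger0_norm ?ceil_ge0; last first.
  by apply: lt_le_trans x0; rewrite ltrN10.
have := ceilB1_lt x; rewrite intrB /=. lra.
Qed.
End Ceil.

Section Prob.
Variable R : comNzRingType.
Lemma sum_ffun_prod (I J : finType) (G : I -> J -> R) :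
  \sum_(f : {ffun I -> J}) \prod_i G i (f i) = \prod_i \sum_j G i j.
Proof. by rewrite bigA_distr_bigA. Qed.

Lemma sum_ffun_one (I J : finType) (F : I -> J -> R) (h : J -> R) (i0 : I) :
  (forall i, \sum_j F i j = 1) ->
  \sum_(f : {ffun I -> J}) (\prod_i F i (f i)) * h (f i0) = \sum_j F i0 j * h j.
Proof.
move=> H.
transitivity (\sum_(f : {ffun I -> J}) \prod_i (F i (f i) * (if i == i0 then h (f i) else 1))).
  apply: eq_bigr => f _; rewrite big_split /=; congr (_ * _).
  rewrite (bigD1 i0) //= eqxx big1 ?mulr1 // => i /negbTE -> //.
rewrite (sum_ffun_prod (fun i x => F i x * (if i == i0 then h x else 1))) (bigD1 i0) //= eqxx.
rewrite [X in _ * X](eq_bigr (fun _ => 1)); last first.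
  by move=> i /negbTE Hi; rewrite -[RHS](H i); apply: eq_bigr => j _; rewrite Hi /= mulr1.
by rewrite big1_eq mulr1.
Qed.

Lemma sum_ffun_mass (I J : finType) (F : I -> J -> R) :
  (forall i, \sum_j F i j = 1) ->
  \sum_(f : {ffun I -> J}) (\prod_i F i (f i)) = 1.
Proof. by move=> H; rewrite (sum_ffun_prod F) big1. Qed.

Lemma sum_ffun_prod2 (I J : finType) (F G : I -> J -> R) :
  \sum_(f : {ffun I -> J}) (\prod_i F i (f i)) * (\prod_i G i (f i))
  = \prod_i \sum_j F i j * G i j.
Proof.
rewrite -(sum_ffun_prod (fun i x => F i x * G i x)); apply: eq_bigr => f _; by rewrite big_split.
Qed.

Lemma sum_pair1 (A B : finType) (P1 : A -> R) (P2 : B -> R) (h : A -> R) :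
  \sum_(x : A * B) (P1 x.1 * P2 x.2) * h x.1 = (\sum_a P1 a * h a) * \sum_b P2 b.
Proof.
rewrite -(pair_bigA _ (fun a b => P1 a * P2 b * h a)) /= big_distrl /=; apply: eq_bigr => a _.
rewrite big_distrr /=; apply: eq_bigr => b _; ring.
Qed.

Lemma sum_pair2 (A B : finType) (P1 : A -> R) (P2 : B -> R) (h : B -> R) :
  \sum_(x : A * B) (P1 x.1 * P2 x.2) * h x.2 = (\sum_a P1 a) * \sum_b P2 b * h b.
Proof.
rewrite -(pair_bigA _ (fun a b => P1 a * P2 b * h b)) /= big_distrl /=; apply: eq_bigr => a _.
rewrite big_distrr /=; apply: eq_bigr => b _; ring.
Qed.
End Prob.
Section Tape.
Variable R : realType.
Definition Pin (r : R) K (f : {ffun 'I_K -> bool}) : R := \prod_(k < K) bern r (f k).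
Definition Ptape (r1 r2 : R) T0 E K (x : tape T0 E K) : R :=
  Pin r1 x.1 * \prod_(i < E) Pin r2 (x.2 i).

Lemma bern_sum (r : R) : \sum_b bern r b = 1.
Proof. rewrite big_bool /bern /=; ring. Qed.

Lemma Pin_mass (r : R) K : \sum_(f : {ffun 'I_K -> bool}) Pin r f = 1.
Proof. rewrite /Pin. apply: (@sum_ffun_mass _ _ _ (fun _ b => bern r b)) => i; exact: bern_sum. Qed.

Lemma Pin_prod (r : R) K (g : 'I_K -> bool -> R) :
  \sum_(f : {ffun 'I_K -> bool}) Pin r f * \prod_k g k (f k)
  = \prod_k \sum_b bern r b * g k b.
Proof. rewrite /Pin; exact: (@sum_ffun_prod2 _ _ _ (fun _ b => bern r b) g). Qed.

Lemma PE_mass (r : R) E K :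
  \sum_(b : {ffun 'I_E -> {ffun 'I_K -> bool}}) \prod_(i < E) Pin r (b i) = 1.
Proof. apply: (@sum_ffun_mass _ _ _ (fun _ f => Pin r f)) => i; exact: Pin_mass. Qed.

Lemma Ptape_1 (r1 r2 : R) T0 E K (h : {ffun 'I_T0 -> bool} -> R) :
  \sum_(x : tape T0 E K) Ptape r1 r2 x * h x.1 = \sum_f Pin r1 f * h f.
Proof.
rewrite /Ptape (@sum_pair1 _ _ _ (fun a : {ffun 'I_T0 -> bool} => Pin r1 a)
   (fun b : {ffun 'I_E -> {ffun 'I_K -> bool}} => \prod_(i < E) Pin r2 (b i)) h).
by rewrite PE_mass mulr1.
Qed.

Lemma Ptape_mass (r1 r2 : R) T0 E K :
  \sum_(x : tape T0 E K) Ptape r1 r2 x = 1.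
Proof.
have := @Ptape_1 r1 r2 T0 E K (fun _ => 1).
under eq_bigr do rewrite mulr1.
move=> ->; under eq_bigr do rewrite mulr1; exact: Pin_mass.
Qed.

Lemma Ptape_2 (r1 r2 : R) T0 E K (i0 : 'I_E) (h : {ffun 'I_K -> bool} -> R) :
  \sum_(x : tape T0 E K) Ptape r1 r2 x * h (x.2 i0) = \sum_f Pin r2 f * h f.
Proof.
rewrite /Ptape (@sum_pair2 _ _ _ (fun a : {ffun 'I_T0 -> bool} => Pin r1 a)
   (fun b : {ffun 'I_E -> {ffun 'I_K -> bool}} => \prod_(i < E) Pin r2 (b i))
   (fun b => h (b i0))).
rewrite Pin_mass mul1r.
apply: (@sum_ffun_one _ _ _ (fun _ f => Pin r2 f)) => i; exact: Pin_mass.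
Qed.

Lemma probE d (T : orderType d) m T0 E K (s : 'I_m -> T) (q1 q2 : T -> R)
  (w : Omega m T0 E K) :
  prob s q1 q2 w = \prod_(j < m) Ptape (q1 (s j)) (q2 (s j)) (w j).
Proof. by []. Qed.

Lemma prob_mass d (T : orderType d) m T0 E K (s : 'I_m -> T) (q1 q2 : T -> R) :
  \sum_(w : Omega m T0 E K) prob s q1 q2 w = 1.
Proof.
under eq_bigr do rewrite probE.
apply: (@sum_ffun_mass _ _ _ (fun j x => Ptape (q1 (s j)) (q2 (s j)) x)) => i.
exact: Ptape_mass.
Qed.

Lemma prob_one d (T : orderType d) m T0 E K (s : 'I_m -> T) (q1 q2 : T -> R)
  (j0 : 'I_m) (h : tape T0 E K -> R) :
  \sum_(w : Omega m T0 E K) prob s q1 q2 w * h (w j0)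
  = \sum_x Ptape (q1 (s j0)) (q2 (s j0)) x * h x.
Proof.
under eq_bigr do rewrite probE.
apply: (@sum_ffun_one _ _ _ (fun j x => Ptape (q1 (s j)) (q2 (s j)) x)) => i.
exact: Ptape_mass.
Qed.

Lemma prob_ge0 d (T : orderType d) m T0 E K (s : 'I_m -> T) (q1 q2 : T -> R)
  (w : Omega m T0 E K) :
  (forall j, 0 <= q1 (s j) <= 1) -> (forall j, 0 <= q2 (s j) <= 1) ->
  0 <= prob s q1 q2 w.
Proof.
move=> H1 H2; rewrite probE; apply: prodr_ge0 => j _.
have bern_ge0 (r : R) b : 0 <= r <= 1 -> 0 <= bern r b.
  by case: b => /andP[? ?] /=; lra.
rewrite /Ptape /Pin; apply: mulr_ge0; apply: prodr_ge0 => i _.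
  exact: bern_ge0.
apply: prodr_ge0 => k _; exact: bern_ge0.
Qed.
End Tape.
Section Chernoff.
Variable R : realType.

Definition gf (mu : R) (t k : nat) (b : bool) : R :=
  if (k < t)%N then (if b then mu else mu^-1) else 1.

Lemma sum_lt_min K t : (\sum_(k < K) ((k < t)%N : nat) = minn t K)%N.
Proof.
elim: K => [|K IH]; first by rewrite big_ord0 minn0.
rewrite big_ord_recr /= IH.
case: (ltnP K t) => h /=; lia.
Qed.

Lemma maj_count K (f : {ffun 'I_K -> bool}) t :
  majority f t = (t < 2 * \sum_(k < K) (((k < t)%N && f k) : nat))%N.
Proof.
rewrite /majority big_mkcond /=; congr (_ < 2 * _)%N.
by apply: eq_bigr => k _; case: (k < t)%N.
Qed.

Lemma ab_sum K (f : {ffun 'I_K -> bool}) t :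
  (\sum_(k < K) (((k < t)%N && f k) : nat) + \sum_(k < K) (((k < t)%N && ~~ f k) : nat)
   = minn t K)%N.
Proof.
rewrite -big_split /= -sum_lt_min; apply: eq_bigr => k _.
by case: (k < t)%N; case: (f k).
Qed.

Lemma gf_prod (mu : R) K t (f : {ffun 'I_K -> bool}) :
  \prod_(k < K) gf mu t k (f k) =
  mu ^+ (\sum_(k < K) (((k < t)%N && f k) : nat)) *
  mu^-1 ^+ (\sum_(k < K) (((k < t)%N && ~~ f k) : nat)).
Proof.
rewrite -!prodrXr -big_split /=; apply: eq_bigr => k _.
rewrite /gf; case: (k < t)%N; case: (f k) => /=; by rewrite ?expr1 ?expr0 ?mulr1 ?mul1r.
Qed.

Lemma pow_ratio (l : R) a b : 1 <= l -> (a <= b)%N -> 1 <= l ^+ b * l^-1 ^+ a.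
Proof.
move=> l1 ab; have l0 : l != 0 by apply/negP => /eqP l0; move: l1; rewrite l0 ler10.
rewrite -(subnK ab) exprD exprVn -mulrA mulfV ?mulr1; first exact: exprn_ege1.
by rewrite expf_neq0.
Qed.

Lemma maj_le (l : R) K t (f : {ffun 'I_K -> bool}) :
  1 <= l -> (t <= K)%N -> majority f t -> 1 <= \prod_(k < K) gf l t k (f k).
Proof.
move=> l1 tK; rewrite maj_count gf_prod => h; apply: pow_ratio => //.
have := ab_sum f t; rewrite (minn_idPl tK); lia.
Qed.

Lemma nmaj_le (l : R) K t (f : {ffun 'I_K -> bool}) :
  1 <= l -> (t <= K)%N -> ~~ majority f t -> 1 <= \prod_(k < K) gf l^-1 t k (f k).
Proof.
move=> l1 tK; rewrite maj_count gf_prod invrK mulrC -ltnNge => h.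
apply: pow_ratio => //.
have := ab_sum f t; rewrite (minn_idPl tK); lia.
Qed.

Lemma gf_ge0 (mu : R) t k b : 0 < mu -> 0 <= gf mu t k b.
Proof.
move=> mu0; rewrite /gf; case: (k < t)%N; case: b => //; apply: ltW => //.
by rewrite invr_gt0.
Qed.

Lemma gf_exp (r mu : R) K t : (t <= K)%N ->
  \sum_(f : {ffun 'I_K -> bool}) Pin r f * \prod_(k < K) gf mu t k (f k)
  = (r * mu + (1 - r) * mu^-1) ^+ t.
Proof.
move=> tK; rewrite (@Pin_prod R r K (gf mu t)).
rewrite (eq_bigr (fun k : 'I_K => (r * mu + (1 - r) * mu^-1) ^+ ((k < t)%N : nat))).
  by rewrite prodrXr sum_lt_min (minn_idPl tK).
move=> k _; rewrite big_bool /gf /bern /=; case: (k < t)%N => /=.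
  by rewrite expr1.
by rewrite expr0 !mulr1; ring.
Qed.

Lemma v_mono1 (r p l : R) : 1 <= l -> r <= p ->
  r * l + (1 - r) * l^-1 <= p * l + (1 - p) * l^-1.
Proof.
move=> l1 rp; have l0 : 0 < l by lra.
have hl : l^-1 <= 1 by rewrite invr_le1 // ?unitf_gt0.
nra.
Qed.

Lemma v_mono2 (r p l : R) : 1 <= l -> 1 - p <= r ->
  r * l^-1 + (1 - r) * l^-1^-1 <= p * l + (1 - p) * l^-1.
Proof.
move=> l1 rp; have l0 : 0 < l by lra.
have hl : l^-1 <= 1 by rewrite invr_le1 // ?unitf_gt0.
rewrite invrK; nra.
Qed.

Lemma v_ge0 (r mu : R) : 0 <= r <= 1 -> 0 < mu -> 0 <= r * mu + (1 - r) * mu^-1.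
Proof.
move=> /andP[r0 r1] mu0; have : 0 < mu^-1 by rewrite invr_gt0.
nra.
Qed.

Lemma chern_param (p : R) : 0 <= p < 1 / 2 ->
  exists l : R, 1 <= l /\ p * l + (1 - p) * l^-1 <= expR (- ((1 - 2 * p) ^+ 2 / 2)).
Proof.
move=> /andP[p0 p1].
have [pz|pnz] := eqVneq p 0.
  exists 2; split; first lra.
  rewrite pz; have -> : (0:R) * 2 + (1 - 0) * 2^-1 = 1/2 by field.
  have -> : (1 - 2 * (0:R)) ^+ 2 / 2 = 1/2 by field.
  apply: le_trans (expR_ge1Dx _); lra.
have pp : 0 < p by rewrite lt_def pnz p0.
set a := (1 - p) / p.
have a1 : 1 <= a by rewrite /a ler_pdivlMr //; lra.
have a0 : 0 <= a by lra.
exists (Num.sqrt a); split.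
  by rewrite -(sqrtr1 R) ler_wsqrtr.
set l := Num.sqrt a.
have l2 : l ^+ 2 = a by rewrite sqr_sqrtr.
have l1 : 1 <= l by rewrite -(sqrtr1 R) ler_wsqrtr.
have lp : 0 < l by lra.
have e : (1 - p) * l^-1 = p * l.
  apply: (mulIf (lt0r_neq0 lp)) => /=; rewrite -mulrA mulVf ?(lt0r_neq0 lp) // mulr1.
  rewrite -mulrA -expr2 l2 /a mulrCA mulfV ?mulr1 //; exact: lt0r_neq0.
rewrite e.
set x := (1 - 2 * p) ^+ 2.
have ex : expR (- x) = expR (- (x / 2)) ^+ 2.
  by rewrite -expRM_natl; congr expR; rewrite /= mulrN; congr (- _); field.
have h1 : 1 - x <= expR (- x) by rewrite -[1 - x]/(1 + - x); exact: expR_ge1Dx.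
have h2 : (p * l + p * l) ^+ 2 = 1 - x.
  rewrite /x; have -> : p * l + p * l = 2 * p * l by ring.
  rewrite exprMn l2 /a; field; exact: lt0r_neq0.
have h3 : 0 < expR (- (x / 2)) := expR_gt0 _.
have h4 : 0 <= p * l + p * l by nra.
rewrite ex in h1; rewrite -h2 in h1.
nra.
Qed.

Lemma decay (v x c L t : R) : 0 <= v -> v <= expR (- (x / 2)) ->
  0 <= x -> 2 <= c * x -> 0 <= L -> 4 * c * L <= t ->
  forall tn : nat, tn%:R = t -> v ^+ tn <= expR (- (4 * L)).
Proof.
move=> v0 vx x0 cx L0 tL tn tE.
apply: (le_trans (y := expR (- (x / 2)) ^+ tn)).
  by rewrite lerXn2r // nnegrE // ltW // expR_gt0.
rewrite -expRM_natl ler_expR tE.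
have : 8 * L <= t * x by nra.
lra.
Qed.
End Chernoff.
Section Det.
Variables (m T0 E K : nat) (t : nat -> nat).

Definition rt_step (b : {ffun 'I_E -> {ffun 'I_K -> bool}}) (i : 'I_E) (acc : nat * bool) :=
  if majority (b i) (t i.+1) then ((t i.+1 + acc.1)%N, acc.2) else (t i.+1, false).

Definition SS := (\sum_(i <- enum 'I_E) t i.+1)%N.

Lemma rt_le (b : {ffun 'I_E -> {ffun 'I_K -> bool}}) (l : seq 'I_E) : ((foldr (rt_step b) (0%N, true) l).1 <= \sum_(i <- l) t i.+1)%N.
Proof.
elim: l => [|i l IH]; first by rewrite big_nil.
rewrite big_cons /= {1}/rt_step; case: ifP => _ /=; lia.
Qed.

Lemma rt_all (b : {ffun 'I_E -> {ffun 'I_K -> bool}}) (l : seq 'I_E) :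
  all (fun i => majority (b i) (t i.+1)) l ->
  foldr (rt_step b) (0%N, true) l = (\sum_(i <- l) t i.+1, true)%N.
Proof.
elim: l => [|i l IH]; first by rewrite big_nil.
rewrite big_cons /= => /andP[h1 h2]; rewrite /rt_step h1 IH //.
Qed.

Definition bad (x : tape T0 E K) : bool :=
  majority x.1 T0 && ~~ [forall i, majority (x.2 i) (t i.+1)].

Lemma re_le (x : tape T0 E K) : ((run_elem x t).1 <= T0 + SS)%N.
Proof.
rewrite /run_elem; case: ifP => _ /=; last by rewrite leq_addr.
rewrite leq_add2l; exact: rt_le.
Qed.

Lemma re_good (x : tape T0 E K) : ~~ bad x -> ~~ (run_elem x t).2 -> ((run_elem x t).1 <= T0)%N.
Proof.
rewrite /bad /run_elem; case: ifP => //= hm hf.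
have -> : run_tests x.2 t = (SS, true).
  apply: rt_all; apply/allP => i _; move/negbNE/forallP: hf; exact.
by [].
Qed.

Definition tq_step (w : Omega m T0 E K) (j : 'I_m) (acc : nat) :=
  let r := run_elem (w j) t in (r.1 + (if r.2 then 0 else acc))%N.

Lemma tq_le (w : Omega m T0 E K) l :
  (foldr (tq_step w) 0%N l <= size l * (T0 + SS))%N.
Proof.
elim: l => [|j l IH] //=.
rewrite {1}/tq_step; have := re_le (w j); case: (run_elem (w j) t).2 => /=; nia.
Qed.

Lemma tq_good (w : Omega m T0 E K) l : (forall j, ~~ bad (w j)) ->
  (foldr (tq_step w) 0%N l <= size l * T0 + SS)%N.
Proof.
move=> H; elim: l => [|j l IH] //=.
rewrite {1}/tq_step; have := re_le (w j); have := re_good (H j).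
case: (run_elem (w j) t).2 => /=; last by move=> h _; have := h isT; lia.
move=> _; lia.
Qed.

Lemma total_eq (w : Omega m T0 E K) :
  total_queries t w = foldr (tq_step w) 0%N (enum 'I_m).
Proof. by []. Qed.

Lemma total_le (w : Omega m T0 E K) : (total_queries t w <= m * (T0 + SS))%N.
Proof. by rewrite total_eq; have := tq_le w (enum 'I_m); rewrite size_enum_ord. Qed.

Lemma total_good (w : Omega m T0 E K) : (forall j, ~~ bad (w j)) ->
  (total_queries t w <= m * T0 + SS)%N.
Proof. by move=> H; rewrite total_eq; have := tq_good (enum 'I_m) H; rewrite size_enum_ord. Qed.

Lemma SS_E : SS = (\sum_(i < E) t i.+1)%N.
Proof. by rewrite /SS big_enum. Qed.
End Det.
Section Num5.
Variable R : realType.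

Lemma ceiln_R (x : R) : 0 <= x -> (ceiln x)%:R = (Num.ceil x)%:~R :> R.
Proof.
move=> x0; rewrite /ceiln natr_absz ger0_norm // ceil_ge0.
by apply: lt_le_trans x0; rewrite ltrN10.
Qed.

Lemma ceiln_mono (x y : R) : 0 <= x -> x <= y -> (ceiln x <= ceiln y)%N.
Proof.
move=> x0 xy; rewrite -(ler_nat R) !ceiln_R //; last exact: le_trans xy.
by rewrite ler_int le_ceil.
Qed.

Lemma cq_bound (p : R) : 0 <= p < 1 / 2 -> 2 <= (cq p)%:R * (1 - 2 * p) ^+ 2.
Proof.
move=> /andP[p0 p1]; have x0 : 0 < (1 - 2 * p) ^+ 2 by apply: exprn_gt0; lra.
have := ceiln_ge (x := 4 * (1 - p) / (1 - 2 * p) ^+ 2).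
rewrite -/(cq p) => h.
have h' : 4 * (1 - p) / (1 - 2 * p) ^+ 2 <= (cq p)%:R.
  apply: h; apply: divr_ge0; lra.
move: h'; rewrite ler_pdivrMr //; lra.
Qed.

Lemma ln2_pos : 0 < ln (2 : R).
Proof. apply: ln_gt0; lra. Qed.

Lemma ln2_le1 : ln (2 : R) <= 1.
Proof.
have e : 2 <= expR (1 : R) by have := expR_ge1Dx (1 : R); lra.
rewrite -[X in _ <= X](expRK 1) ler_ln // ?posrE //. all: try lra. all: exact: expR_gt0.
Qed.

Lemma pow2E k : (2 : R) ^+ k = expR (k%:R * ln 2).
Proof. by rewrite expRM_natl lnK // posrE; lra. Qed.

Lemma sum_pow2 E : (\sum_(i < E) 2 ^ i.+1 < 2 ^ E.+1)%N.
Proof.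
elim: E => [|E IH]; first by rewrite big_ord0.
rewrite big_ord_recr /= !expnS in IH *; lia.
Qed.
End Num5.
Unset Implicit Arguments. Set Strict Implicit.
Theorem lemma17 (R : realType) (p1 p2 : R) :
  0 <= p1 < 1 / 2 -> 0 <= p2 < 1 / 2 ->
  exists C : R,
    forall (n m : nat) (d : Order.disp_t) (T : orderType d)
           (s : 'I_m -> T) (q1 q2 : T -> R),
      (2 <= n)%N ->
      (n%:R / log2 (n%:R : R) = m%:R) ->
      injective s ->
      oracle_ok s q1 p1 (1 / 6) (1 / 3) ->
      oracle_ok s q2 p2 (1 / 3) (3 / 4) ->
      expected_queries p1 p2 n s q1 q2 <= C * n%:R.
Proof.
move=> hp1 hp2.
have [l1 [l1ge hv1]] := chern_param hp1.
have [l2 [l2ge hv2]] := chern_param hp2.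
have cb1 := cq_bound hp1. have cb2 := cq_bound hp2.
set c1 := cq p1 in cb1 *. set c2 := cq p2 in cb2 *.
pose K1 : R := (16 * c1 + 24 * c2 + 5)%N%:R.
exists (6 * K1).
move=> n m d T s q1 q2 n2 hm _ o1 o2.
rewrite /expected_queries /=.
set T0 := prelim_size p1 n.
set E := Defs.eta R n.
set t := test_size p2 n.
set Kk := t E.
set L := ln (n%:R : R).
set beta := expR (- (4 * L)).
have l1p : 0 < l1 by lra.
have l2p : 0 < l2 by lra.
have L0 : 0 < L by apply: ln_gt0; rewrite ltr1n.
have c10 : 0 <= (c1%:R : R) by apply: ler0n.
have c20 : 0 <= (c2%:R : R) by apply: ler0n.
have tR : forall i, (t i)%:R = 2 * (ceiln (2 ^+ i * L))%:R * c2%:R + 1 :> R.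
  by move=> i; rewrite /t /test_size -/L natrD !natrM.
have pw0 : forall i, 0 <= 2 ^+ i * L :> R.
  by move=> i; apply: mulr_ge0; [apply: exprn_ge0; lra | exact: ltW].
have tmono : forall i j, (i <= j)%N -> (t i <= t j)%N.
  move=> i j ij; rewrite /t /test_size -/L.
  have : (ceiln (2 ^+ i * L) <= ceiln (2 ^+ j * L))%N.
    apply: ceiln_mono => //; apply: ler_wpM2r; [exact: ltW | apply: ler_weXn2l => //; lra].
  move=> h; rewrite leq_add2r; apply: leq_mul => //; apply: leq_mul => //.
have tlo : forall i, (1 <= i)%N -> 4 * c2%:R * L <= (t i)%:R.
  move=> i i1; rewrite tR.
  have hc := ceiln_ge (pw0 i).
  have h2 : (2 : R) <= 2 ^+ i.
    by rewrite -[X in X <= _]expr1; apply: ler_weXn2l => //; lra.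
  have h3 : 2 * L <= 2 ^+ i * L by apply: ler_wpM2r => //; exact: ltW.
  have h4 : 2 * L <= (ceiln (2 ^+ i * L))%:R by lra.
  have h5 : 4 * c2%:R * L <= 2 * (ceiln (2 ^+ i * L))%:R * c2%:R.
    have -> : 4 * c2%:R * L = 2 * (2 * L) * c2%:R by ring.
    apply: ler_wpM2r => //; lra.
  lra.
have thi : forall i, (t i)%:R <= 2 * c2%:R * L * 2 ^+ i + (2 * c2%:R + 1).
  move=> i; rewrite tR; have hc := ceiln_lt (pw0 i).
  have : (ceiln (2 ^+ i * L))%:R * c2%:R <= (2 ^+ i * L + 1) * c2%:R.
    apply: ler_wpM2r => //; exact: ltW.
  lra.
have T0R : T0%:R = 8 * c1%:R * (ceiln L)%:R + 1 :> R.
  by rewrite /T0 /prelim_size -/L natrD !natrM.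
have T0lo : 4 * c1%:R * L <= T0%:R.
  rewrite T0R; have hc := ceiln_ge (ltW L0).
  have : L * c1%:R <= (ceiln L)%:R * c1%:R by apply: ler_wpM2r.
  have : 0 <= L * c1%:R by apply: mulr_ge0 => //; exact: ltW.
  lra.
have Edef : E = (1 + ceiln (ln (m%:R : R) / ln (2 : R)))%N by rewrite /E /Defs.eta hm.
have KkE : Kk = t E by [].
clearbody Kk; clearbody t T0 E.
pose Z (j : 'I_m) (x : tape T0 E Kk) : R :=
  if in_lower s (1 / 3 : R) (s j) then \sum_(i < E) \prod_(k < Kk) gf l2^-1 (t i.+1) k (x.2 i k)
  else \prod_(k < T0) gf l1 T0 k (x.1 k).
have Z0 : forall j x, 0 <= Z j x.
  move=> j x; rewrite /Z; case: ifP => _.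
    apply: sumr_ge0 => i _; apply: prodr_ge0 => k _; apply: gf_ge0; rewrite invr_gt0 //.
  apply: prodr_ge0 => k _; exact: gf_ge0.
have Zbad : forall j x, bad t x -> 1 <= Z j x.
  move=> j x /andP[hm1 hf]; rewrite /Z; case: ifP => _.
    move/forallPn: hf => [i hi].
    rewrite (bigD1 i) //=; apply: ler_wpDr.
      apply: sumr_ge0 => i' _; apply: prodr_ge0 => k _; apply: gf_ge0; rewrite invr_gt0 //.
    apply: nmaj_le => //; rewrite KkE; apply: tmono; exact: ltn_ord.
  exact: maj_le.
set A : R := (m * T0 + SS E t)%N%:R.
set B : R := (m * (T0 + SS E t))%N%:R.
have A0 : 0 <= A by apply: ler0n.
have B0 : 0 <= B by apply: ler0n.
have pw : forall w : Omega m T0 E Kk,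
    (total_queries t w)%:R <= A + B * \sum_j Z j (w j).
  move=> w; case: (boolP [forall j, ~~ bad t (w j)]) => H.
    apply: (le_trans (y := A)); first by rewrite ler_nat; apply: total_good => j; move/forallP: H.
    apply: ler_wpDr => //; apply: mulr_ge0 => //; apply: sumr_ge0 => j _; exact: Z0.
  move/forallPn: H => [j /negbNE hj].
  apply: (le_trans (y := B)); first by rewrite ler_nat; apply: total_le.
  apply: ler_wpDl => //.
  rewrite -[X in X <= _]mulr1; apply: ler_wpM2l => //.
  rewrite (bigD1 j) //=; apply: ler_wpDr; [apply: sumr_ge0 => ? _; exact: Z0 | exact: Zbad].
have pge0 : forall w : Omega m T0 E Kk, 0 <= prob s q1 q2 w.
  by move=> w; apply: prob_ge0 => j; [case: (o1 j) | case: (o2 j)].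
apply: (le_trans (y := \sum_(w : Omega m T0 E Kk) prob s q1 q2 w * (A + B * \sum_j Z j (w j)))).
  apply: ler_sum => w _; apply: ler_wpM2l => //; exact: pw.
have -> : \sum_(w : Omega m T0 E Kk) prob s q1 q2 w * (A + B * \sum_j Z j (w j))
   = A + B * \sum_j \sum_x Ptape (q1 (s j)) (q2 (s j)) x * Z j x.
  transitivity (\sum_(w : Omega m T0 E Kk) (A * prob s q1 q2 w +
                   B * \sum_j prob s q1 q2 w * Z j (w j))).
    apply: eq_bigr => w _; rewrite mulrDr mulrCA big_distrr /=; congr (_ + _); exact: mulrC.
  rewrite big_split /= -!big_distrr /= prob_mass mulr1 exchange_big /=.
  congr (_ + B * _); apply: eq_bigr => j _; exact: prob_one.
have beta0 : 0 <= beta by apply: ltW; apply: expR_gt0.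
have E0 : 0 <= (E%:R : R) by apply: ler0n.
have Ej : forall j, \sum_x Ptape (q1 (s j)) (q2 (s j)) x * Z j x <= (E%:R + 1) * beta.
  move=> j; case: (o1 j) => q1b [_ q1hi]; case: (o2 j) => q2b [q2lo _].
  unfold Z; case hl: (in_lower s (1 / 3 : R) (s j)).
    under eq_bigr do rewrite big_distrr /=.
    rewrite exchange_big /=.
    apply: (le_trans (y := \sum_(i < E) beta)).
      apply: ler_sum => i _.
      rewrite (Ptape_2 _ _ _ i (fun f => \prod_(k < Kk) gf l2^-1 (t i.+1) k (f k))).
      rewrite gf_exp; last by rewrite KkE; apply: tmono; exact: ltn_ord.
      apply: (decay (x := (1 - 2 * p2) ^+ 2) (c := c2%:R) (L := L) (t := (t i.+1)%:R)) => //.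
      - apply: v_ge0 => //; rewrite invr_gt0 //.
      - apply: le_trans hv2; apply: v_mono2 => //; exact: q2lo.
      - exact: sqr_ge0.
      - exact: ltW.
      - exact: tlo.
    rewrite sumr_const card_ord -mulr_natl; nra.
  rewrite (Ptape_1 _ _ _ _ (fun f => \prod_(k < T0) gf l1 T0 k (f k))) gf_exp //.
  apply: (le_trans (y := beta)); last by nra.
  apply: (decay (x := (1 - 2 * p1) ^+ 2) (c := c1%:R) (L := L) (t := T0%:R)) => //.
  - exact: v_ge0.
  - apply: le_trans hv1; apply: v_mono1 => //; apply: q1hi; exact: negbT.
  - exact: sqr_ge0.
  - exact: ltW.
have nR : (2 : R) <= n%:R by rewrite (ler_nat R 2 n).
have ln2p := @ln2_pos R. have ln2l := @ln2_le1 R.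
have l2L : ln (2 : R) <= L by rewrite ler_ln // posrE; lra.
have hmL : m%:R * L = n%:R * ln (2 : R).
  rewrite -hm /log2 -/L; field.
  by rewrite (lt0r_neq0 L0) (lt0r_neq0 ln2p).
have mn : (m%:R : R) <= n%:R.
  have : m%:R * L <= n%:R * L by rewrite hmL; apply: ler_wpM2l => //; lra.
  by rewrite ler_pM2r.
have m1 : (1 : R) <= m%:R.
  have : (0 : R) < m%:R.
    have : 0 < m%:R * L by rewrite hmL; apply: mulr_gt0 => //; lra.
    by rewrite pmulr_lgt0.
  by rewrite ltr0n ler1n.
have Ln : L <= n%:R by apply: ltW; apply: ln_sublinear; lra.
have betan : beta * n%:R ^+ 4 = 1.
  rewrite /beta expRN -[n%:R in X in _ * X]lnK ?posrE; last by lra.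
  by rewrite -expRM_natl -/L mulVf // gt_eqF // expR_gt0.
have p2E : (2 : R) ^+ E <= 4 * m%:R.
  rewrite Edef.
  have y0 : 0 <= ln (m%:R : R) / ln (2 : R).
    by apply: divr_ge0; [apply: ln_ge0 | exact: ltW].
  have hc := ceiln_lt y0.
  rewrite exprD expr1 pow2E.
  have : expR ((ceiln (ln (m%:R : R) / ln (2 : R)))%:R * ln (2 : R)) <= 2 * m%:R.
    have -> : 2 * m%:R = expR (ln (m%:R : R) + ln (2 : R) : R).
      rewrite expRD !lnK ?posrE; [ring | lra | lra].
    rewrite ler_expR.
    have -> : ln (m%:R : R) + ln (2 : R) = (ln (m%:R : R) / ln (2 : R) + 1) * ln (2 : R).
      by field; rewrite (lt0r_neq0 ln2p).
    apply: ler_wpM2r; [exact: ltW | exact: ltW].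
  lra.
have EE : (E%:R : R) <= 4 * m%:R.
  apply: le_trans p2E; rewrite -natrX ler_nat; apply: ltnW; exact: ltn_expl.
have SSb : (SS E t)%:R <= 2 * c2%:R * L * (8 * m%:R) + E%:R * (2 * c2%:R + 1) :> R.
  rewrite SS_E natr_sum.
  apply: (le_trans (y := \sum_(i < E) (2 * c2%:R * L * 2 ^+ i.+1 + (2 * c2%:R + 1)))).
    by apply: ler_sum => i _; exact: thi.
  rewrite big_split /= -mulr_sumr sumr_const card_ord; apply: lerD; last by rewrite [X in _ <= X]mulr_natl.
  apply: ler_wpM2l; first by apply: mulr_ge0 => //; [lra | exact: ltW].
  have -> : \sum_(i < E) (2 : R) ^+ i.+1 = (\sum_(i < E) 2 ^ i.+1)%:R.
    by rewrite natr_sum; apply: eq_bigr => i _; rewrite natrX.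
  apply: (le_trans (y := (2 ^ E.+1)%:R)).
    by rewrite ler_nat; apply: ltnW; exact: sum_pow2.
  by rewrite natrX exprS; lra.
have SSb2 : (SS E t)%:R <= (24 * c2%:R + 4) * n%:R :> R.
  have e1 : 2 * c2%:R * L * (8 * m%:R) = 16 * c2%:R * (n%:R * ln (2 : R)) :> R.
    by rewrite -hmL; ring.
  have e2 : c2%:R * (n%:R * ln (2 : R)) <= c2%:R * n%:R :> R.
    by apply: ler_wpM2l => //; rewrite -[X in _ <= X]mulr1; apply: ler_wpM2l; lra.
  have e3 : E%:R * (2 * c2%:R + 1) <= (4 * n%:R) * (2 * c2%:R + 1) :> R.
    by apply: ler_wpM2r; lra.
  lra.
have T0hi : T0%:R <= 8 * c1%:R * (L + 1) + 1 :> R.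
  rewrite T0R; have hc := ceiln_lt (ltW L0).
  have : (ceiln L)%:R * c1%:R <= (L + 1) * c1%:R by apply: ler_wpM2r => //; exact: ltW.
  lra.
have mT0 : m%:R * T0%:R <= (16 * c1%:R + 1) * n%:R :> R.
  apply: (le_trans (y := m%:R * (8 * c1%:R * (L + 1) + 1))).
    by apply: ler_wpM2l => //; lra.
  have -> : m%:R * (8 * c1%:R * (L + 1) + 1) = 8 * c1%:R * (m%:R * L) + (8 * c1%:R + 1) * m%:R.
    by ring.
  rewrite hmL.
  have e2 : c1%:R * (n%:R * ln (2 : R)) <= c1%:R * n%:R :> R.
    by apply: ler_wpM2l => //; rewrite -[X in _ <= X]mulr1; apply: ler_wpM2l; lra.
  have e3 : (8 * c1%:R + 1) * m%:R <= (8 * c1%:R + 1) * n%:R :> R.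
    by apply: ler_wpM2l => //; lra.
  lra.
have T0n : T0%:R <= (16 * c1%:R + 1) * n%:R :> R.
  apply: le_trans T0hi _.
  have : c1%:R * (L + 1) <= c1%:R * (2 * n%:R) :> R by apply: ler_wpM2l => //; lra.
  have : 0 <= c1%:R * n%:R :> R by apply: mulr_ge0 => //; lra.
  lra.
have K1E : K1 = 16 * c1%:R + 24 * c2%:R + 5.
  by rewrite /K1 natrD natrD !natrM.
have AE : A = m%:R * T0%:R + (SS E t)%:R by rewrite /A natrD natrM.
have BE : B = m%:R * (T0%:R + (SS E t)%:R) by rewrite /B natrM natrD.
have Ab : A <= K1 * n%:R by rewrite AE K1E; lra.
have Xb : T0%:R + (SS E t)%:R <= K1 * n%:R :> R by rewrite K1E; lra.
have X0 : 0 <= T0%:R + (SS E t)%:R :> R by apply: addr_ge0; apply: ler0n.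
have K10 : 0 <= K1 by apply: ler0n.
apply: (le_trans (y := A + B * (m%:R * ((E%:R + 1) * beta)))).
  rewrite lerD2l; apply: ler_wpM2l => //.
  apply: (le_trans (y := \sum_(j < m) (E%:R + 1) * beta)).
    by apply: ler_sum => j _; exact: Ej.
  by rewrite sumr_const card_ord [X in _ <= X]mulr_natl.
have Bb : B <= n%:R * (K1 * n%:R).
  rewrite BE; apply: ler_pM => //; apply: ler0n.
have Cb : m%:R * ((E%:R + 1) * beta) <= n%:R * ((5 * n%:R) * beta) :> R.
  apply: ler_pM; [lra | apply: mulr_ge0; lra | lra | apply: ler_wpM2r => //; lra].
have fin : B * (m%:R * ((E%:R + 1) * beta)) <= 5 * K1.
  apply: (le_trans (y := (n%:R * (K1 * n%:R)) * (n%:R * ((5 * n%:R) * beta)))).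
    apply: ler_pM => //; apply: mulr_ge0; [apply: ler0n | apply: mulr_ge0 => //; lra].
  have -> : (n%:R * (K1 * n%:R)) * (n%:R * ((5 * n%:R) * beta)) = 5 * K1 * (beta * n%:R ^+ 4) :> R.
    by ring.
  by rewrite betan mulr1.
have : 5 * K1 <= 5 * K1 * n%:R.
  by rewrite -[X in X <= _]mulr1; apply: ler_wpM2l; lra.
lra.
Qed.
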